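(* Let $G$ be a classical graph with vertex set $[n]=\{1,\dots,n\}$, let $\mathcal{S}_G=\operatorname{span}\{|e_i\rangle\langle e_j| : i=j \text{ or } i\text{ adjacent to } j\}\subseteq M_n$ be its associated quantum graph, and let $k\in\mathbb{N}$. Then $G$ is $k$-connected if and only if $\mathcal{S}_G$ is $k$-connected.
   Context: $(|e_k\rangle)$ is the standard basis of $\mathbb{C}^n$. A quantum graph on $M_n$ is a linear subspace $\mathcal{S}\subseteq M_n$ closed under adjoints and containing $I_n$. A quantum graph $\mathcal{T}\subseteq M_N$ is connected if $\mathcal{T}^m=M_N$ for some $m\in\mathbb{N}$ (powers are spans of products); otherwise disconnected. For a projection $P\in M_n$ ($P=P^2=P^\dagger$), $(I_n-P)\mathcal{S}(I_n-P)$ is regarded as a quantum graph in $(I_n-P)M_n(I_n-P)\cong M_{n-\operatorname{rank}(P)}$. A projection $P$ is a separator of $\mathcal{S}$ if $(I_n-P)\mathcal{S}(I_n-P)$ is either disconnected (as a subspace of $M_{n-\operatorname{rank}(P)}$) or $1$-dimensional. $\mathcal{S}$ is $k$-connected if every separator of $\mathcal{S}$ has rank at least $k$. Classically, $G$ is $k$-connected if every set of vertices whose removal leaves a disconnected graph or a single vertex has at least $k$ elements. *)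

(* Defs.v *)
(* Complex numbers are modelled by algC (algebraic complex
   numbers, a numClosedFieldType with conjugation). *)
From HB Require Import structures.
From mathcomp Require Import all_boot all_order all_algebra all_field.
Set Implicit Arguments. Unset Strict Implicit. Unset Printing Implicit Defensive.
Import Order.TTheory GRing.Theory Num.Theory.
Local Open Scope ring_scope.

Definition simple_graph n (e : rel 'I_n) : Prop := symmetric e /\ irreflexive e.

Definition rel_minus n (e : rel 'I_n) (A : {set 'I_n}) : rel 'I_n :=
  [rel x y | [&& x \notin A, y \notin A & e x y]].

Definition cl_disconnected_after n (e : rel 'I_n) (A : {set 'I_n}) : Prop :=
  exists x y, [/\ x \notin A, y \notin A & ~~ connect (rel_minus e A) x y].

Definition cl_separator n (e : rel 'I_n) (A : {set 'I_n}) : Prop :=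
  cl_disconnected_after e A \/ #|~: A| = 1%N.

Definition cl_kconnected n (e : rel 'I_n) (k : nat) : Prop :=
  forall A : {set 'I_n}, cl_separator e A -> (k <= #|A|)%N.

Definition adjmx n (A : 'M[algC]_n) : 'M[algC]_n := (map_mx Num.conj A)^T.

Definition is_projection n (P : 'M[algC]_n) : Prop :=
  P *m P = P /\ adjmx P = P.

Definition quantum_graph n (S : {vspace 'M[algC]_n}) : Prop :=
  (forall A, A \in S -> adjmx A \in S) /\ (1%:M \in S).

(* span of all products u v with u in U, v in V (by bilinearity it suffices
   to take products of basis vectors) *)
Definition mxprodv n (U V : {vspace 'M[algC]_n}) : {vspace 'M[algC]_n} :=
  (<<[seq u *m v | u <- vbasis U, v <- vbasis V]>>)%VS.

Fixpoint mxpowv n (T : {vspace 'M[algC]_n}) (m : nat) : {vspace 'M[algC]_n} :=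
  match m with
  | 0 => T   (* unused: powers are only taken for m >= 1 *)
  | 1 => T
  | m'.+1 => mxprodv (mxpowv T m') T
  end.

Definition compress n (Q : 'M[algC]_n) (S : {vspace 'M[algC]_n})
  : {vspace 'M[algC]_n} :=
  (linfun (fun A : 'M[algC]_n => Q *m A *m Q) @: S)%VS.

(* The corner algebra Q M_n Q, identified with M_{rank Q} for a projection Q. *)
Definition corner n (Q : 'M[algC]_n) : {vspace 'M[algC]_n} := compress Q fullv.

Definition q_connected_in n (Q : 'M[algC]_n) (T : {vspace 'M[algC]_n}) : Prop :=
  exists m, (0 < m)%N /\ mxpowv T m = corner Q.

Definition q_separator n (S : {vspace 'M[algC]_n}) (P : 'M[algC]_n) : Prop :=
  is_projection P /\
  let Q := 1%:M - P in
  let T := compress Q S in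
  (~ q_connected_in Q T \/ \dim T = 1%N).

Definition q_kconnected n (S : {vspace 'M[algC]_n}) (k : nat) : Prop :=
  forall P : 'M[algC]_n, q_separator S P -> (k <= \rank P)%N.

Definition SG n (e : rel 'I_n) : {vspace 'M[algC]_n} :=
  (<<[seq delta_mx ij.1 ij.2 | ij <- enum [pred ij : 'I_n * 'I_n |
        (ij.1 == ij.2) || e ij.1 ij.2]]>>)%VS.

(* Main.v *)
Require Import Defs.
From HB Require Import structures.
From mathcomp Require Import all_boot all_order all_algebra all_field.
From mathcomp Require Import zify.
Set Implicit Arguments. Unset Strict Implicit. Unset Printing Implicit Defensive.
Import Order.TTheory GRing.Theory Num.Theory.
Local Open Scope ring_scope.


Section Gen.
Variable n : nat.
Implicit Types (U V W T : {vspace 'M[algC]_n}).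

Lemma sum_deltaL (F : 'I_n -> algC) b :
  \sum_k ((k == b)%:R * F k) = F b.
Proof.
rewrite (bigD1 b) //= eqxx mul1r big1 ?addr0 // => k /negbTE ->; exact: mul0r.
Qed.

Lemma prod_mem U V u v : u \in U -> v \in V -> u *m v \in mxprodv U V.
Proof.
move=> Hu Hv; rewrite (coord_vbasis Hu) (coord_vbasis Hv) mulmx_suml.
apply: memv_suml => i _; rewrite -scalemxAl; apply: memvZ; rewrite mulmx_sumr.
apply: memv_suml => j _; rewrite -scalemxAr; apply: memvZ.
apply: memv_span; apply: (allpairs_f (fun a b => a *m b)); apply: mem_nth; by rewrite size_tuple.
Qed.

Lemma prod_sub U V W : (forall u v, u \in U -> v \in V -> u *m v \in W) ->
  (mxprodv U V <= W)%VS.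
Proof.
move=> H; apply/span_subvP => x /allpairsP [[u v] [/= Hu Hv ->]].
by apply: H; apply: vbasis_mem.
Qed.

Lemma span_entry0 (s : seq 'M[algC]_n) i j :
  (forall x, x \in s -> x i j = 0) -> forall X, X \in <<s>>%VS -> X i j = 0.
Proof.
move=> H X HX; pose t := in_tuple s; have HX' : X \in <<t>>%VS by [].
rewrite (coord_span HX') summxE big1 // => k _.
by rewrite mxE H ?mulr0 // mem_nth.
Qed.

Lemma deltaM (a b : 'I_n) (M : 'M[algC]_n) i k :
  (delta_mx a b *m M) i k = (i == a)%:R * M b k.
Proof.
rewrite mxE; under eq_bigr => l _ do rewrite mxE.
rewrite (bigD1 b) //= eqxx andbT big1 ?addr0 // => l /negbTE ->.
by rewrite andbF mul0r.
Qed.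

Lemma Mdelta (c d : 'I_n) (M : 'M[algC]_n) k j :
  (M *m delta_mx c d) k j = M k c * (j == d)%:R.
Proof.
rewrite mxE; under eq_bigr => l _ do rewrite mxE.
rewrite (bigD1 c) //= eqxx big1 ?addr0 // => l /negbTE ->.
by rewrite mulr0.
Qed.

Lemma delta_mid (a b c d : 'I_n) (M : 'M[algC]_n) :
  delta_mx a b *m M *m delta_mx c d = M b c *: delta_mx a d.
Proof.
apply/matrixP => i j; rewrite Mdelta deltaM !mxE.
by case: (i == a); case: (j == d); rewrite /= ?mul1r ?mul0r ?mulr1 ?mulr0.
Qed.

Lemma compressE (Q A : 'M[algC]_n) :
  linfun (fun A0 : 'M[algC]_n => Q *m A0 *m Q) A = Q *m A *m Q.
Proof. exact: (lfunE (mulmxr Q \o mulmx Q) A). Qed.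

End Gen.


Section Dir5.
Variable n : nat.

Definition dmx (A : {set 'I_n}) : 'M[algC]_n := diag_mx (\row_i (i \in A)%:R).

Lemma dmxE A i j : dmx A i j = ((i == j) && (i \in A))%:R.
Proof. by rewrite !mxE; case: (i == j); case: (i \in A). Qed.

Lemma dmx_proj A : is_projection (dmx A).
Proof.
split.
  rewrite /dmx mul_diag_mx; apply/matrixP => i j; rewrite !mxE.
  by case: (i == j); case: (i \in A); rewrite /= ?mul1r ?mul0r.
apply/matrixP => i j; rewrite /adjmx mxE [map_mx _ _ _ _]mxE !dmxE conjC_nat.
by case: (boolP (i == j)) => [/eqP -> | /negbTE ij]; rewrite ?eqxx // eq_sym ij.
Qed.

Lemma rank_sum_le (I : Type) (r : seq I) (P : pred I) (F : I -> 'M[algC]_n) :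
  (\rank (\sum_(i <- r | P i) F i)%R <= \sum_(i <- r | P i) \rank (F i))%N.
Proof.
elim: r => [|x r IH]; first by rewrite !big_nil mxrank0.
rewrite !big_cons; case: (P x) => //.
have H := mxrank_add (F x) (\sum_(j <- r | P j) F j).
by apply: (leq_trans H); rewrite leq_add2l.
Qed.

Lemma dmx_rank A : (\rank (dmx A) <= #|A|)%N.
Proof.
have -> : dmx A = \sum_(a in A) delta_mx a a.
  apply/matrixP => i j; rewrite dmxE summxE.
  under eq_bigr => a _ do rewrite mxE.
  case: (boolP (i == j)) => [/eqP <- | ij] /=.
    case: (boolP (i \in A)) => iA.
      rewrite (bigD1 i) //= eqxx big1 ?addr0 // => a /andP [_ /negbTE].
      by rewrite eq_sym => ->.
    rewrite big1 // => a aA; case: (boolP (i == a)) => // /eqP ia.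
    by move: iA; rewrite ia aA.
  rewrite big1 // => a _; case: (boolP (i == a)) => //= /eqP ia.
  by case: (boolP (j == a)) => //= /eqP ja; move: ij; rewrite ia ja eqxx.
apply: leq_trans (rank_sum_le _ _ _) _.
under eq_bigr => a _ do rewrite mxrank_delta.
by rewrite sum1_card.
Qed.

Lemma one_sub_dmx A : 1%:M - dmx A = dmx (~: A).
Proof.
apply/matrixP => i j; rewrite !(dmxE, mxE) inE.
by case: (i == j); case: (i \in A); rewrite /= ?subr0 ?subrr.
Qed.

Lemma dmx_mid A (Y : 'M[algC]_n) u v :
  (dmx A *m Y *m dmx A) u v = (u \in A)%:R * Y u v * (v \in A)%:R.
Proof. by rewrite /dmx mul_diag_mx mul_mx_diag !mxE. Qed.

Variable e : rel 'I_n.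

Lemma SG_entry Y u v : Y \in SG e -> ~~ ((u == v) || e u v) -> Y u v = 0.
Proof.
move=> HY Huv; apply: (span_entry0 _ HY) => x /mapP [[a b]].
rewrite mem_enum inE /= => Hab ->; rewrite mxE.
case: (boolP (u == a)) => //= /eqP ua; case: (boolP (v == b)) => //= /eqP vb.
by move: Huv; rewrite ua vb Hab.
Qed.

Lemma delta_SG a b : (a == b) || e a b -> delta_mx a b \in SG e.
Proof.
move=> H; apply: memv_span; apply/mapP; exists (a, b) => //.
by rewrite mem_enum inE.
Qed.

Lemma one_SG : (1%:M : 'M[algC]_n) \in SG e.
Proof.
rewrite (matrix_sum_delta 1%:M); apply: memv_suml => i _; apply: memv_suml => j _.
case: (boolP (i == j)) => [/eqP <- | ij].
  by apply: memvZ; apply: delta_SG; rewrite eqxx.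
by rewrite mxE (negbTE ij) scale0r mem0v.
Qed.

Lemma q_to_cl k : q_kconnected (SG e) k -> cl_kconnected e k.
Proof.
move=> Hq A HA; apply: leq_trans (dmx_rank A); apply: Hq.
split; first exact: dmx_proj.
rewrite one_sub_dmx.
set Q := dmx (~: A); set T := compress Q (SG e).
case: HA => [[x [y [xA yA nc]]] | H1].
  left; move=> [m [m0 Hm]].
  pose cn := connect (rel_minus e A).
  have hT : forall X, X \in T -> forall u v, ~~ cn u v -> X u v = 0.
    move=> X /memv_imgP [Y HY ->] u v nuv; rewrite compressE dmx_mid !inE.
    case: (boolP (u \in A)) => uA /=; first by rewrite !mul0r.
    case: (boolP (v \in A)) => vA /=; first by rewrite mulr0.
    rewrite (SG_entry HY) ?mulr0 ?mul0r //; apply/negP => /orP [/eqP uv | euv].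
      by move: nuv; rewrite uv /cn connect0.
    have : rel_minus e A u v by rewrite /rel_minus /= uA vA euv.
    by move/connect1; rewrite -/cn (negbTE nuv).
  have good : forall m X, X \in mxpowv T m -> forall u v, ~~ cn u v -> X u v = 0.
    elim => [|[|m'] IH] X HX; try exact: hT.
    move=> u v nuv; apply: (span_entry0 _ HX) => z /allpairsP [[b1 b2] [/= H1 H2 ->]].
    rewrite mxE big1 // => w _.
    case: (boolP (cn u w)) => uw.
      have nwv : ~~ cn w v.
        by apply/negP => wv; move: nuv; rewrite /cn (connect_trans uw wv).
      by rewrite (hT _ (vbasis_mem H2) _ _ nwv) mulr0.
    by rewrite (IH _ (vbasis_mem H1) _ _ uw) mul0r.
  have Hc : Q *m delta_mx x y *m Q \in corner Q.
    by have := memv_img (linfun (fun A0 : 'M[algC]_n => Q *m A0 *m Q)) (memvf (delta_mx x y)); rewrite compressE.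
  rewrite -Hm in Hc; have := good _ _ Hc x y nc.
  rewrite dmx_mid !inE xA yA mxE !eqxx /= mul1r mulr1 => /eqP; by rewrite oner_eq0.
right; have /cards1P [x Hx] : #|~: A| == 1%N by rewrite H1.
rewrite /T /Q Hx.
have Ex : (delta_mx x x : 'M[algC]_n) != 0.
  apply/eqP => /matrixP /(_ x x); rewrite !mxE eqxx => /eqP; by rewrite oner_eq0.
suff -> : compress (dmx [set x]) (SG e) = <[delta_mx x x]>%VS by rewrite dim_vline Ex.
apply/eqP; rewrite eqEsubv; apply/andP; split.
  apply/subvP => X /memv_imgP [Y HY ->]; rewrite compressE /=; apply/vlineP; exists (Y x x).
  apply/matrixP => u v; rewrite dmx_mid !mxE !inE.
  case: (boolP (u == x)) => [/eqP -> | ]; case: (boolP (v == x)) => [/eqP -> | ];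
    by rewrite /= ?mul1r ?mulr1 ?mul0r ?mulr0.
rewrite -memvE.
have -> : (delta_mx x x : 'M[algC]_n) = dmx [set x] *m delta_mx x x *m dmx [set x].
  apply/matrixP => u v; rewrite dmx_mid !mxE !inE.
  by case: (u == x); case: (v == x); rewrite /= ?mul1r ?mulr1 ?mul0r ?mulr0.
have := memv_img (linfun (fun A0 : 'M[algC]_n => dmx [set x] *m A0 *m dmx [set x]))
  (@delta_SG x x (introT orP (or_introl (eqxx x)))); by rewrite compressE.
Qed.

End Dir5.


Section Dir4.
Variable n : nat.
Variable e : rel 'I_n.
Variable P : 'M[algC]_n.
Hypothesis HP : is_projection P.

Let Q := 1%:M - P.

Lemma QQ : Q *m Q = Q.
Proof.
case: HP => HPP _.
by rewrite /Q mulmxBl mul1mx mulmxBr mulmx1 HPP subrr subr0.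
Qed.

Lemma Qsym i j : Q i j = (Q j i)^*.
Proof.
case: HP => _ /matrixP HPa; have := HPa i j; rewrite /adjmx !mxE => Hij.
by rewrite rmorphB /= conjC_nat -Hij eq_sym.
Qed.

Lemma Qzero a : Q a a = 0 -> forall k, Q a k = 0 /\ Q k a = 0.
Proof.
move=> H0.
have Hs : \sum_k (Q a k * (Q a k)^*) = 0.
  have E1 : Q a a = \sum_k Q a k * Q k a by rewrite -{1}QQ mxE.
  by rewrite -[X in _ = X]H0 E1; apply: eq_bigr => k _; rewrite -Qsym.
have Hk : forall k, Q a k = 0.
  move=> k; apply/eqP; rewrite -mul_conjC_eq0; apply/eqP.
  by apply: (psumr_eq0P (fun i _ => mul_conjC_ge0 _) Hs).
by move=> k; split; rewrite ?Hk // Qsym Hk conjC0.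
Qed.

Definition Gen (a b : 'I_n) := Q *m delta_mx a b *m Q.

Lemma GenE a b i j : Gen a b i j = Q i a * Q b j.
Proof.
rewrite /Gen -mulmxA mxE.
under eq_bigr => k _ do rewrite deltaM mulrCA.
by rewrite (eq_bigr (fun k => (k == a)%:R * (Q i k * Q b j))) ?sum_deltaL.
Qed.

Lemma Gen_mul a b c d : Gen a b *m Gen c d = Q b c *: Gen a d.
Proof.
rewrite /Gen -!mulmxA (mulmxA Q Q) QQ (mulmxA (delta_mx a b) Q).
rewrite (mulmxA (delta_mx a b *m Q)) delta_mid -scalemxAl mulmxA -scalemxAr.
by rewrite mulmxA.
Qed.

Let T := compress Q (SG e).

Lemma Gen_T a b : (a == b) || e a b -> Gen a b \in T.
Proof.
move=> H; have := memv_img (linfun (fun A0 : 'M[algC]_n => Q *m A0 *m Q)) (delta_SG H).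
by rewrite compressE.
Qed.

Lemma powS m X Y : (0 < m)%N -> X \in mxpowv T m -> Y \in T -> X *m Y \in mxpowv T m.+1.
Proof. by case: m => // m _ HX HY; apply: prod_mem. Qed.

Lemma Gen_step m a b c : (0 < m)%N -> Gen a b \in mxpowv T m -> Q b b != 0 ->
  (b == c) || e b c -> Gen a c \in mxpowv T m.+1.
Proof.
move=> m0 Hab Hb Hbc; have := powS m0 Hab (Gen_T Hbc); rewrite Gen_mul => H.
have -> : Gen a c = (Q b b)^-1 *: (Q b b *: Gen a c) by rewrite scalerA mulVf // scale1r.
exact: memvZ.
Qed.

Lemma Gen_pad m a b : (0 < m)%N -> Gen a b \in mxpowv T m -> Q b b != 0 ->
  forall m', (m <= m')%N -> Gen a b \in mxpowv T m'.
Proof.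
move=> m0 H Hb; elim => [|m' IH]; first by rewrite leqn0 => /eqP m00; move: m0; rewrite m00.
rewrite leq_eqVlt => /orP [/eqP <- //| Hlt].
apply: Gen_step => //; first exact: leq_trans m0 Hlt.
  exact: IH.
  exact: Hb.
by rewrite eqxx.
Qed.

Let C := [set i | Q i i == 0].

Lemma Gen_path a p : Q a a != 0 -> path (rel_minus e C) a p ->
  Gen a (last a p) \in mxpowv T (size p).+1.
Proof.
move=> Ha; elim/last_ind: p => [|p z IH]; first by move=> _; apply: Gen_T; rewrite eqxx.
rewrite rcons_path => /andP [Hp Hz]; rewrite last_rcons size_rcons.
move: Hz; rewrite /rel_minus /= !inE => /and3P [Hl _ Hez].
apply: (@Gen_step (size p).+1) => //; first exact: IH.
  exact: Hl.
by rewrite Hez orbT.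
Qed.

Lemma pow_corner m : (mxpowv T m <= corner Q)%VS.
Proof.
have hT : (T <= corner Q)%VS by apply: limgS; apply: subvf.
elim: m => [|[|m] IH] //.
apply: prod_sub => u v Hu Hv.
move: (subvP IH u Hu) (subvP hT v Hv) => /memv_imgP [X _ ->] /memv_imgP [Y _ ->].
rewrite !compressE.
have := memv_img (linfun (fun A0 : 'M[algC]_n => Q *m A0 *m Q)) (memvf (X *m Q *m Q *m Y)).
by rewrite compressE !mulmxA.
Qed.

Lemma conn_corner : (forall x y, x \notin C -> y \notin C -> connect (rel_minus e C) x y) ->
  mxpowv T n.+1 = corner Q.
Proof.
move=> Hconn; apply/eqP; rewrite eqEsubv pow_corner /=.
apply/subvP => X /memv_imgP [Y _ ->]; rewrite compressE (matrix_sum_delta Y).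
rewrite mulmx_sumr mulmx_suml; apply: memv_suml => a _.
rewrite mulmx_sumr mulmx_suml; apply: memv_suml => b _.
rewrite -scalemxAr -scalemxAl; apply: memvZ; rewrite -/(Gen a b).
case: (boolP (Q a a == 0)) => [/eqP Ha | Ha].
  have -> : Gen a b = 0 by apply/matrixP => i j; rewrite GenE (Qzero Ha i).2 mul0r mxE.
  exact: mem0v.
case: (boolP (Q b b == 0)) => [/eqP Hb | Hb].
  have -> : Gen a b = 0 by apply/matrixP => i j; rewrite GenE (Qzero Hb j).1 mulr0 mxE.
  exact: mem0v.
have /connectP [p Hp Eb] : connect (rel_minus e C) a b by apply: Hconn; rewrite inE.
move: Hb; rewrite Eb; case: (shortenP Hp) => p' Hp' Hu _ Hb.
have Hle : ((size p').+1 <= n.+1)%N.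
  have := card_uniqP Hu; move: (max_card (mem (a :: p'))); rewrite card_ord => Hle Hs.
  by move: Hle; rewrite Hs /= ltnS => /ltnW.
exact: (Gen_pad (ltn0Sn _) (Gen_path Ha Hp') Hb Hle).
Qed.

Lemma card_C_rank : (#|C| <= \rank P)%N.
Proof.
pose f := (@enum_val _ (mem C)).
pose M := rowsub f (1%:M : 'M[algC]_n).
have HM : M = rowsub f P.
  apply/matrixP => i j; rewrite !mxE.
  have Hfi : f i \in C by apply: enum_valP.
  move: Hfi; rewrite inE => /eqP /Qzero /(_ j) [H _].
  by move: H; rewrite /Q !mxE => /eqP; rewrite subr_eq0 => /eqP.
have H1 : (\rank M <= \rank P)%N by rewrite HM mxrankS // rowsub_sub.
have H2 : M *m M^T = 1%:M.
  apply/matrixP => i j; rewrite !mxE.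
  under eq_bigr => k _ do rewrite !mxE eq_sym.
  rewrite sum_deltaL (inj_eq enum_val_inj) eq_sym.
  done.
apply: leq_trans H1; rewrite -{1}(mxrank1 algC #|C|) -H2; exact: mxrankM_maxl.
Qed.

Lemma cl_to_q_P k : cl_kconnected e k -> q_separator (SG e) P -> (k <= \rank P)%N.
Proof.
move=> Hcl [_ Hsep]; rewrite leqNgt; apply/negP => Hlt.
have HnC : ~ cl_separator e C.
  move=> Hs; have h1 := Hcl _ Hs; have h2 := card_C_rank.
  by move: Hlt; rewrite ltnNge (leq_trans h1 h2).
have Hconn : forall x y, x \notin C -> y \notin C -> connect (rel_minus e C) x y.
  move=> x y hx hy; apply/negPn/negP => nc; apply: HnC; left; by exists x, y; split.
have Hc := conn_corner Hconn.
move: Hsep => /= [Hnc | Hdim].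
  by apply: Hnc; exists n.+1; split.
have hn : (0 < n)%N.
  have := dimvS (subvf T); rewrite dimvf -/T Hdim => h.
  have h' : (1 <= n * n)%N by exact: h.
  by move: h'; rewrite muln_gt0 andbb.
pose x0 := Ordinal hn.
have Hk : (k <= n.-1)%N.
  have := Hcl [set~ x0]; rewrite cardsC1 card_ord; apply; right.
  by rewrite setCK cards1.
have HQ : (n <= \rank P + \rank Q)%N.
  rewrite -{1}(mxrank1 algC n).
  have -> : (1%:M : 'M[algC]_n) = P + Q by rewrite /Q addrC subrK.
  exact: mxrank_add.
have HQ2 : (2 <= \rank Q)%N by lia.
have HQ0 : Q != 0 by apply/eqP => Q0; move: HQ2; rewrite Q0 mxrank0.
case: (pickP (fun a => Q a a != 0)) => [a Ha | H0]; last first.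
  move/eqP: HQ0; apply; apply/matrixP => i j.
  have := H0 i; rewrite /= => /negbFE /eqP /Qzero /(_ j) [-> _]; by rewrite mxE.
have HQT : Q \in T.
  have := memv_img (linfun (fun A0 : 'M[algC]_n => Q *m A0 *m Q)) (one_SG e).
  by rewrite compressE mulmx1 QQ.
have HT : T = <[Q]>%VS.
  apply/eqP; rewrite eq_sym eqEdim -memvE HQT dim_vline HQ0 /=.
  by rewrite -/T Hdim.
have := @Gen_T a a; rewrite eqxx => /(_ isT); rewrite HT => /vlineP [c Hgc].
have Hg0 : Gen a a != 0.
  apply/eqP => /matrixP /(_ a a); rewrite GenE [RHS]mxE => /eqP.
  by rewrite mulf_eq0 orbb (negbTE Ha).
have Hc0 : c != 0 by apply/eqP => c0; move: Hg0; rewrite Hgc c0 scale0r eqxx.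
have Hr1 : (\rank (Gen a a) <= 1)%N.
  rewrite /Gen; apply: leq_trans (mxrankM_maxl _ _) _; apply: leq_trans (mxrankM_maxr _ _) _.
  by rewrite mxrank_delta.
by move: Hr1; rewrite Hgc mxrank_scale_nz // => h; move: HQ2; rewrite leqNgt ltnS h.
Qed.

End Dir4.

Local Close Scope ring_scope.

Theorem proposition4p4 (n : nat) (e : rel 'I_n) (k : nat) :
  simple_graph e ->
  cl_kconnected e k <-> q_kconnected (SG e) k.
Proof.
move=> _; split; last exact: q_to_cl.
move=> Hcl P HS; apply: (cl_to_q_P _ Hcl HS); by case: HS.
Qed.
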